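(* Let $s>0$, $\mu\in\mathbb{R}$, $\tilde\varepsilon=s\varepsilon$, $\tilde\delta=s\delta$, and let $\varphi\in H^1_2((0,R))$, smooth on $(0,R)$, satisfy on $(0,R)$ $$-\partial_z\Big(\Big(\frac{4\tilde\varepsilon}{3}+\tilde\delta+\gamma P_0\Big)\frac{\partial_z\varphi}{z^2}\Big)+4\frac{\partial_zP_0}{z^3}\varphi=\frac{\mu\varrho_0}{z^2}\varphi.$$ Then there is $C>0$ such that $|\varphi(z)|\le Cz^3$ and $|\varphi'(z)|\le Cz^2$ for all $z$ near $0$.
   Context: Fix constants $\varepsilon>0$, $\delta>0$, $K>0$ and $6/5<\gamma<4/3$. Let $\varrho_0:[0,R]\to[0,\infty)$ be a Lane–Emden stationary density of radius $R>0$: $\varrho_0$ is smooth and positive on $[0,R)$, $\varrho_0(R)=0$, $P_0:=K\varrho_0^\gamma$ satisfies $\partial_z P_0(z)=-\frac{4\pi\varrho_0(z)}{z^2}\int_0^z\varrho_0(y)y^2\,dy$, and $\varrho_0(z)$ is comparable to $(R-z)^{1/(\gamma-1)}$ for $z$ near $R$. $H^1_2((0,R))$ is the completion of $\{u\in C^\infty([0,R]):u(0)=0\}$ in the norm $\|u\|^2=\int_0^R\frac{|u'|^2+|u|^2}{z^2}dz$. *)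

(* Defs.v *)
From Stdlib Require Import Reals Lra.
Open Scope R_scope.

(* Real power, set to 0 for non-positive base (P0 = K rho0^gamma). *)
Definition rpow (x y : R) : R :=
  match Rlt_dec 0 x with left _ => Rpower x y | right _ => 0 end.

Definition smooth_on (a b : R) (f : R -> R) : Prop :=
  exists D : nat -> R -> R,
    (forall x, a < x < b -> D O x = f x) /\
    (forall n x, a < x < b -> derivable_pt_lim (D n) x (D (S n) x)).

Definition smooth_R (f : R -> R) : Prop :=
  exists D : nat -> R -> R,
    (forall x, D O x = f x) /\
    (forall n x, derivable_pt_lim (D n) x (D (S n) x)).

Definition is_RInt (f : R -> R) (a b v : R) : Prop :=
  exists pr : Riemann_integrable f a b, RiemannInt pr = v.

(* The (possibly improper) integral over (0,R) of a nonnegative integrand g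
   is at most e: all Riemann integrals over compact [a,b] in (0,R) are <= e. *)
Definition int_0R_le (Rad : R) (g : R -> R) (e : R) : Prop :=
  forall a b (pr : Riemann_integrable g a b),
    0 < a -> a < b -> b < Rad -> RiemannInt pr <= e.

Definition lane_emden (K gam Rad : R) (rho0 : R -> R) : Prop :=
  0 < Rad /\
  (* smooth on [0,Rad): restriction of a smooth function on (-eta,Rad) *)
  (exists eta g, 0 < eta /\ smooth_on (- eta) Rad g /\
     forall z, 0 <= z < Rad -> g z = rho0 z) /\
  (forall z, 0 <= z < Rad -> 0 < rho0 z) /\
  rho0 Rad = 0 /\
  (* hydrostatic equilibrium for P0 = K rho0^gamma *)
  (forall z, 0 < z < Rad ->
     exists m, is_RInt (fun y => rho0 y * y ^ 2) 0 z m /\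
       derivable_pt_lim (fun x => K * rpow (rho0 x) gam) z
         (- (4 * PI * rho0 z / z ^ 2) * m)) /\
  (exists eta c1 c2, 0 < eta /\ 0 < c1 /\ 0 < c2 /\
     forall z, Rad - eta < z < Rad ->
       c1 * Rpower (Rad - z) (1 / (gam - 1)) <= rho0 z /\
       rho0 z <= c2 * Rpower (Rad - z) (1 / (gam - 1))).

(* phi (with classical derivative dphi on (0,Rad)) belongs to H^1_2((0,Rad)):
   it is a limit, in the norm int (|u'|^2+|u|^2)/z^2, of smooth u on [0,Rad]
   with u(0)=0. *)
Definition in_H12 (Rad : R) (phi dphi : R -> R) : Prop :=
  exists (u du : nat -> R -> R),
    (forall n, smooth_R (u n)) /\
    (forall n x, derivable_pt_lim (u n) x (du n x)) /\
    (forall n, u n 0 = 0) /\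
    (forall e, 0 < e -> exists N, forall n, (N <= n)%nat ->
       int_0R_le Rad
         (fun z => ((du n z - dphi z) ^ 2 + (u n z - phi z) ^ 2) / z ^ 2) e).

(* Main.v *)
Require Import Defs.
From Stdlib Require Import Reals Lra ClassicalEpsilon.
From Coquelicot Require Coquelicot.
Open Scope R_scope.

Module DerHelp.
Import Coquelicot.Coquelicot.
Lemma dinv c t : 0 < t -> derivable_pt_lim (fun x => - c / x) t (c / t ^ 2).
Proof. intros. apply is_derive_Reals. auto_derive. lra. field. lra. Qed.
Lemma dlin c t : derivable_pt_lim (fun x => c * x) t c.
Proof. apply is_derive_Reals. auto_derive. auto. ring. Qed.
Lemma dsq c t : derivable_pt_lim (fun x => c * x ^ 2 / 2) t (c * t).
Proof. apply is_derive_Reals. auto_derive. auto. field. Qed.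
Lemma dcub c t : derivable_pt_lim (fun x => c * x ^ 3 / 3) t (c * t ^ 2).
Proof. apply is_derive_Reals. auto_derive. auto. field. Qed.
End DerHelp.
Definition dinv := DerHelp.dinv.
Definition dlin := DerHelp.dlin.
Definition dsq := DerHelp.dsq.
Definition dcub := DerHelp.dcub.

Lemma dpl_loc (f g : R -> R) (x l a b : R) : a < x < b ->
  (forall y, a < y < b -> f y = g y) -> derivable_pt_lim f x l -> derivable_pt_lim g x l.
Proof.
  intros Hx Hfg Hd eps Heps.
  destruct (Hd eps Heps) as [d Hdd].
  assert (Hp : 0 < Rmin d (Rmin (x - a) (b - x))).
  { destruct d as [d dp]; simpl. repeat apply Rmin_pos; lra. }
  exists (mkposreal _ Hp). intros h Hh0 Hh. simpl in Hh.
  assert (h1 : Rabs h < d) by (eapply Rlt_le_trans; [exact Hh| apply Rmin_l]).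
  assert (h2 : Rabs h < Rmin (x - a) (b - x)) by (eapply Rlt_le_trans; [exact Hh| apply Rmin_r]).
  assert (h3 := Rmin_l (x - a) (b - x)). assert (h4 := Rmin_r (x - a) (b - x)).
  apply Rabs_def2 in h2.
  rewrite <- (Hfg (x + h)) by lra. rewrite <- (Hfg x) by lra.
  apply Hdd; auto.
Qed.

Lemma dpl_cont f x l : derivable_pt_lim f x l -> continuity_pt f x.
Proof. intro H. apply derivable_continuous_pt. exists l. exact H. Qed.

Lemma abs_betw x y : Rabs x <= y -> -y <= x <= y.
Proof. intro H. pose proof (Rle_abs x). pose proof (Rle_abs (-x)). rewrite Rabs_Ropp in *. lra. Qed.

Lemma cmp (f f' g g' : R -> R) a b : a <= b ->
  (forall c, a <= c <= b -> derivable_pt_lim f c (f' c)) ->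
  (forall c, a <= c <= b -> derivable_pt_lim g c (g' c)) ->
  (forall c, a <= c <= b -> Rabs (f' c) <= g' c) ->
  Rabs (f b - f a) <= g b - g a.
Proof.
  intros Hab Hf Hg Hb. destruct (Req_dec a b) as [->|Hne].
  { replace (f b - f b) with 0 by ring. rewrite Rabs_R0. lra. }
  assert (Hlt : a < b) by lra.
  destruct (MVT_cor2 (fun x => g x - f x) (fun x => g' x - f' x) a b Hlt) as [c [Hc1 Hc2]].
  { intros c Hc. apply derivable_pt_lim_minus; auto. }
  destruct (MVT_cor2 (fun x => g x + f x) (fun x => g' x + f' x) a b Hlt) as [c' [Hc1' Hc2']].
  { intros c' Hc. apply derivable_pt_lim_plus; auto. }
  assert (B1 := Hb c ltac:(lra)). assert (B2 := Hb c' ltac:(lra)).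
  apply abs_betw in B1. apply abs_betw in B2.
  assert (0 <= (g' c - f' c) * (b - a)) by (apply Rmult_le_pos; lra).
  assert (0 <= (g' c' + f' c') * (b - a)) by (apply Rmult_le_pos; lra).
  apply Rabs_le; lra.
Qed.

Lemma small_lim (phi : R -> R) z X :
  (forall e, 0 < e -> exists d, 0 < d /\ forall t, 0 < t < d -> Rabs (phi t) < e) ->
  0 < z -> (forall z', 0 < z' < z -> Rabs (phi z - phi z') <= X) -> Rabs (phi z) <= X.
Proof.
  intros Hs Hz Hb. destruct (Rle_lt_dec (Rabs (phi z)) X) as [|Hlt]; auto.
  destruct (Hs (Rabs (phi z) - X) ltac:(lra)) as [d [Hd Ht]].
  set (z' := Rmin d z / 2).
  assert (0 < Rmin d z) by (apply Rmin_pos; lra).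
  assert (Rmin d z <= d) by apply Rmin_l. assert (Rmin d z <= z) by apply Rmin_r.
  assert (A1 := Ht z' ltac:(unfold z'; lra)).
  assert (A2 := Hb z' ltac:(unfold z'; lra)).
  assert (A3 := Rabs_triang_inv (phi z) (phi z')). lra.
Qed.

Lemma Rdiv_le_0_compat a b : 0 <= a -> 0 < b -> 0 <= a / b.
Proof. intros. unfold Rdiv. apply Rmult_le_pos; auto. apply Rlt_le, Rinv_0_lt_compat; auto. Qed.

Lemma core (phi dphi w : R->R) (R0 eta A0 Q : R) :
 0 < eta < R0 -> 0 < A0 -> 0 < Q -> Q * eta ^ 2 / A0 <= 1/2 ->
 (forall t, 0<t<R0 -> derivable_pt_lim phi t (dphi t)) ->
 (forall t, 0<t<R0 -> exists l, derivable_pt_lim w t l /\ Rabs l <= Q * Rabs (phi t) / t^2) ->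
 (forall t, 0<t<R0 -> Rabs (dphi t) <= t^2 * Rabs (w t) / A0) ->
 (forall C1, (forall t, 0<t<=eta -> Rabs (dphi t) <= C1 * t) ->
    forall e, 0<e -> exists d, 0<d /\ forall t, 0<t<d -> Rabs (phi t) < e) ->
 exists C, 0<C /\ forall z, 0<z<=eta -> Rabs (phi z) <= C*z^3 /\ Rabs (dphi z) <= C*z^2.
Proof.
  intros Heta HA0 HQ Hsm Hphi Hw Hdw Hsmall.
  destruct (choice (fun t l => 0<t<R0 -> derivable_pt_lim w t l /\ Rabs l <= Q * Rabs (phi t) / t^2))
    as [w' Hw'].
  { intro t. destruct (classic (0<t<R0)) as [H|H].
    - destruct (Hw t H) as [l Hl]. exists l. auto.
    - exists 0. tauto. }
  set (W1 := Rabs (w eta)). set (P1 := Rabs (phi eta)).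
  assert (W1p : 0 <= W1) by apply Rabs_pos.
  assert (Wb : forall Mb z, 0 <= Mb -> 0 < z <= eta ->
     (forall t, z <= t <= eta -> Rabs (phi t) <= Mb) -> Rabs (w z) <= W1 + Q * Mb / z).
  { intros Mb z HMb Hz Hb.
    assert (K := cmp w w' (fun x => - (Q*Mb) / x) (fun x => Q * Mb / x ^ 2) z eta ltac:(lra)).
    refine (_ (K _ _ _)).
    - intro K'. assert (E := Rabs_triang_inv (w z) (w eta)).
      rewrite Rabs_minus_sym in K'. unfold W1.
      assert (0 <= Q * Mb / eta) by (apply Rdiv_le_0_compat; nra).
      assert (- (Q * Mb) / eta - - (Q * Mb) / z = Q*Mb/z - Q*Mb/eta) by (field; lra). lra.
    - intros c Hc. apply Hw'; lra.
    - intros c Hc. apply dinv; lra.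
    - intros c Hc. destruct (Hw' c ltac:(lra)) as [_ Hl].
      eapply Rle_trans; [exact Hl|]. unfold Rdiv. apply Rmult_le_compat_r.
      + apply Rlt_le, Rinv_0_lt_compat. apply pow_lt; lra.
      + apply Rmult_le_compat_l; [lra|]. apply Hb; lra. }
  set (B := 2 * (P1 + W1 * eta ^ 3 / A0)).
  assert (Step1 : forall z, 0 < z <= eta -> Rabs (phi z) <= B).
  { intros z Hz.
    destruct (continuity_ab_maj (fun t => Rabs (phi t)) z eta ltac:(lra)) as [xm [Hxm1 Hxm2]].
    { intros c Hc. apply (continuity_pt_comp phi Rabs). eapply dpl_cont, Hphi; lra.
      apply Rcontinuity_abs. }
    set (Mz := Rabs (phi xm)). assert (HMz : 0 <= Mz) by apply Rabs_pos.
    set (Kc := (W1 * eta ^ 2 + Q * Mz * eta) / A0).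
    assert (K := cmp phi dphi (fun x => Kc * x) (fun _ => Kc) xm eta ltac:(lra)).
    refine (_ (K _ _ _)).
    - intro K'. rewrite Rabs_minus_sym in K'.
      assert (E := Rabs_triang_inv (phi xm) (phi eta)).
      assert (Kc * eta - Kc * xm <= Kc * eta).
      { assert (0 <= Kc) by (unfold Kc; apply Rdiv_le_0_compat; [|lra]; 
           assert (0 <= W1 * eta^2) by (apply Rmult_le_pos; [lra| apply pow_le; lra]);
           assert (0 <= Q*Mz*eta) by (apply Rmult_le_pos; nra); lra). nra. }
      assert (Kc * eta = W1 * eta ^ 3 / A0 + Mz * (Q * eta ^ 2 / A0)) by (unfold Kc; field; lra).
      assert (Mz * (Q * eta ^ 2 / A0) <= Mz * (1/2)) by (apply Rmult_le_compat_l; lra).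
      assert (Mz <= B) by (unfold B, P1, Mz in *; lra).
      assert (Hzz := Hxm1 z ltac:(lra)). simpl in Hzz. fold Mz in Hzz. lra.
    - intros c Hc. apply Hphi; lra.
    - intros c Hc. apply dlin.
    - intros c Hc. eapply Rle_trans. apply Hdw; lra.
      assert (Hwc := Wb Mz c HMz ltac:(lra) ltac:(intros t Ht; apply (Hxm1 t); lra)).
      unfold Kc. unfold Rdiv. apply Rmult_le_compat_r; [apply Rlt_le, Rinv_0_lt_compat; lra|].
      assert (c^2 * Rabs (w c) <= c^2 * (W1 + Q * Mz / c)).
      { apply Rmult_le_compat_l; [apply pow_le; lra| exact Hwc]. }
      assert (c^2 * (W1 + Q * Mz / c) = W1 * c^2 + Q*Mz*c) by (field; lra).
      assert (W1 * c^2 <= W1 * eta^2) by (apply Rmult_le_compat_l; [lra|]; apply pow_incr; lra).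
      assert (Q*Mz*c <= Q*Mz*eta) by (apply Rmult_le_compat_l; nra).
      unfold Rdiv in *. lra. }
  assert (HB : 0 <= B) by (assert (H0 := Step1 eta ltac:(lra)); pose proof (Rabs_pos (phi eta)); lra).
  set (C1 := (W1 * eta + Q * B) / A0).
  assert (Step2 : forall t, 0 < t <= eta -> Rabs (dphi t) <= C1 * t).
  { intros t Ht. eapply Rle_trans. apply Hdw; lra.
    assert (Hwc := Wb B t HB Ht ltac:(intros u Hu; apply Step1; lra)).
    assert (t^2 * Rabs (w t) <= t^2 * (W1 + Q * B / t)).
    { apply Rmult_le_compat_l; [apply pow_le; lra| exact Hwc]. }
    assert (t^2 * (W1 + Q * B / t) = t * (W1 * t + Q*B)) by (field; lra).
    assert (t * (W1 * t + Q*B) <= t * (W1 * eta + Q*B)) by (apply Rmult_le_compat_l; nra).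
    assert (C1 * t = t * (W1 * eta + Q * B) / A0) by (unfold C1; field; lra).
    rewrite H2. unfold Rdiv. apply Rmult_le_compat_r; [apply Rlt_le, Rinv_0_lt_compat; lra|]. lra. }
  assert (Hs := Hsmall C1 Step2).
  assert (C1p : 0 <= C1).
  { assert (H0 := Step2 eta ltac:(lra)). pose proof (Rabs_pos (dphi eta)). nra. }
  set (C2 := C1 / 2).
  assert (Step4 : forall z, 0 < z <= eta -> Rabs (phi z) <= C2 * z ^ 2).
  { intros z Hz. apply small_lim; auto; try lra. intros z' Hz'.
    assert (K := cmp phi dphi (fun x => C1 * x ^ 2 / 2) (fun x => C1 * x) z' z ltac:(lra)).
    refine (_ (K _ _ _)).
    - intro K'. assert (0 <= C1 * z' ^ 2 / 2) by (apply Rdiv_le_0_compat; [apply Rmult_le_pos; [lra|apply pow_le; lra]|lra]).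
      unfold C2. unfold Rdiv in *. lra.
    - intros c Hc. apply Hphi; lra.
    - intros c Hc. apply dsq.
    - intros c Hc. apply Step2; lra. }
  set (W2 := W1 + Q * C2 * eta). set (C3 := W2 / A0).
  assert (C2p : 0 <= C2) by (unfold C2; lra).
  assert (Step5 : forall t, 0 < t <= eta -> Rabs (dphi t) <= C3 * t ^ 2).
  { intros t Ht.
    assert (K := cmp w w' (fun x => Q * C2 * x) (fun _ => Q * C2) t eta ltac:(lra)).
    refine (_ (K _ _ _)).
    - intro K'. rewrite Rabs_minus_sym in K'.
      assert (E := Rabs_triang_inv (w t) (w eta)).
      assert (Hwt : Rabs (w t) <= W2).
      { unfold W2, W1. assert (Q * C2 * eta - Q * C2 * t <= Q * C2 * eta).
        { assert (0 <= Q*C2) by nra. nra. } lra. }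
      eapply Rle_trans. apply Hdw; lra.
      unfold C3. assert (t^2 * Rabs (w t) <= t^2 * W2) by (apply Rmult_le_compat_l; [apply pow_le; lra|auto]).
      unfold Rdiv. rewrite (Rmult_comm (W2 * /A0)). rewrite <- Rmult_assoc.
      apply Rmult_le_compat_r; [apply Rlt_le, Rinv_0_lt_compat; lra|]. lra.
    - intros c Hc. apply Hw'; lra.
    - intros c Hc. apply dlin.
    - intros c Hc. destruct (Hw' c ltac:(lra)) as [_ Hl]. eapply Rle_trans; [exact Hl|].
      assert (Hp := Step4 c ltac:(lra)).
      assert (Q * Rabs (phi c) <= Q * (C2 * c^2)) by (apply Rmult_le_compat_l; lra).
      assert (Q * (C2 * c^2) / c^2 = Q * C2) by (field; lra).
      assert (0 < c^2) by (apply pow_lt; lra).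
      unfold Rdiv in *. assert (Q * Rabs (phi c) * / c^2 <= Q * (C2 * c^2) * / c^2).
      { apply Rmult_le_compat_r; [apply Rlt_le, Rinv_0_lt_compat; lra| lra]. } lra. }
  assert (C3p : 0 <= C3).
  { unfold C3, W2. apply Rdiv_le_0_compat; [|lra]. assert (0 <= Q * C2 * eta) by (apply Rmult_le_pos; nra). lra. }
  assert (Step6 : forall z, 0 < z <= eta -> Rabs (phi z) <= C3 * z ^ 3 / 3).
  { intros z Hz. apply small_lim; auto; try lra. intros z' Hz'.
    assert (K := cmp phi dphi (fun x => C3 * x ^ 3 / 3) (fun x => C3 * x ^ 2) z' z ltac:(lra)).
    refine (_ (K _ _ _)).
    - intro K'. assert (0 <= C3 * z' ^ 3 / 3) by (apply Rdiv_le_0_compat; [apply Rmult_le_pos; [lra|apply pow_le; lra]|lra]).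
      lra.
    - intros c Hc. apply Hphi; lra.
    - intros c Hc. apply dcub.
    - intros c Hc. apply Step5; lra. }
  exists (C3 + 1). split; [lra|]. intros z Hz. split.
  - eapply Rle_trans. apply Step6; auto. assert (0 < z^3) by (apply pow_lt; lra). nra.
  - eapply Rle_trans. apply Step5; auto. assert (0 < z^2) by (apply pow_lt; lra). nra.
Qed.

Lemma cont_sq F x : continuity_pt F x -> continuity_pt (fun z => (F z) ^ 2) x.
Proof. intro H. apply (continuity_pt_comp F (fun y => y ^ 2) x H).
  apply (dpl_cont _ _ _ (derivable_pt_lim_pow _ 2)). Qed.

Lemma h12_small Rad phi dphi eta C1 : 0 < eta < Rad ->
 (forall t, 0<t<Rad -> derivable_pt_lim phi t (dphi t)) ->
 (forall t, 0<t<Rad -> continuity_pt dphi t) ->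
 in_H12 Rad phi dphi ->
 (forall t, 0<t<=eta -> Rabs (dphi t) <= C1 * t) ->
 forall e, 0<e -> exists d, 0<d /\ forall t, 0<t<d -> Rabs (phi t) < e.
Proof.
  intros Heta Hphi Hcd HH HC1 e He.
  destruct HH as [u [du [Hsu [Hdu [Hu0 Hconv]]]]].
  destruct (Hconv 1 Rlt_0_1) as [N HN]. specialize (HN N (le_n N)).
  destruct (Hsu N) as [D' [HD'0 HD']].
  assert (EdU : forall x, du N x = D' 1%nat x).
  { intro x. apply (uniqueness_limite (u N) x). apply Hdu.
    apply (dpl_loc (D' 0%nat) (u N) x _ (x-1) (x+1)); [lra| intros; auto | apply HD']. }
  assert (CdU : forall x, continuity_pt (du N) x).
  { intro x. apply (dpl_cont _ _ (D' 2%nat x)).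
    apply (dpl_loc (D' 1%nat) (du N) x _ (x-1) (x+1)); [lra| intros; auto | apply HD']. }
  assert (CU : forall x, continuity_pt (u N) x) by (intro x; eapply dpl_cont, Hdu).
  destruct (Hdu N 0 1 Rlt_0_1) as [du0 Hdu0].
  set (Lu := Rabs (du N 0) + 1).
  assert (HUb : forall h, 0 < h < du0 -> Rabs (u N h) <= Lu * h).
  { intros h Hh. assert (A := Hdu0 h ltac:(lra) ltac:(rewrite Rabs_pos_eq; lra)).
    rewrite Rplus_0_l, Hu0, Rminus_0_r in A.
    assert (A2 : Rabs (u N h / h) <= Lu).
    { assert (T := Rabs_triang (u N h / h - du N 0) (du N 0)).
      replace (u N h / h - du N 0 + du N 0) with (u N h / h) in T by ring. unfold Lu. lra. }
    replace (u N h) with (u N h / h * h) by (field; lra).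
    rewrite Rabs_mult, (Rabs_pos_eq h) by lra.
    apply Rmult_le_compat_r; lra. }
  set (C' := Rabs C1 + 1).
  assert (HLu : 0 < Lu) by (unfold Lu; pose proof (Rabs_pos (du N 0)); lra).
  assert (HC' : 0 < C') by (unfold C'; pose proof (Rabs_pos C1); lra).
  set (d := Rmin eta (Rmin du0 (Rmin 1 (Rmin (e / (2 * C')) (Rmin (e / (4 * Lu)) (e * e / 8)))))).
  assert (Hdu0p : 0 < du0) by (destruct du0; simpl; lra).
  assert (Hd : 0 < d).
  { unfold d. repeat apply Rmin_pos; try lra; apply Rdiv_lt_0_compat; nra. }
  exists d. split; auto. intros t Ht.
  assert (Hd1 : d <= eta) by apply Rmin_l.
  assert (Hd2 : d <= du0) by (unfold d; eapply Rle_trans; [apply Rmin_r| apply Rmin_l]).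
  assert (Hd3 : d <= 1) by (unfold d; do 2 (eapply Rle_trans; [apply Rmin_r|]); apply Rmin_l).
  assert (Hd4 : d <= e / (2 * C')) by (unfold d; do 3 (eapply Rle_trans; [apply Rmin_r|]); apply Rmin_l).
  assert (Hd5 : d <= e / (4 * Lu)) by (unfold d; do 4 (eapply Rle_trans; [apply Rmin_r|]); apply Rmin_l).
  assert (Hd6 : d <= e * e / 8) by (unfold d; do 4 (eapply Rle_trans; [apply Rmin_r|]); apply Rmin_r).
  destruct (Rlt_le_dec (Rabs (phi t)) e) as [|Hge]; auto. exfalso.
  set (a := t / 2).
  assert (Hlow : forall y, a <= y <= t -> e / 2 <= Rabs (u N y - phi y)).
  { intros y Hy.
    assert (K := cmp phi dphi (fun x => C' * t * x) (fun _ => C' * t) y t ltac:(lra)).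
    refine (_ (K _ _ _)).
    - intro K'. assert (C' * t <= e / 2).
      { assert (C' * t <= C' * (e / (2 * C'))) by (apply Rmult_le_compat_l; lra).
        assert (C' * (e / (2 * C')) = e / 2) by (field; lra). lra. }
      assert (C' * t * t - C' * t * y <= e / 4).
      { replace (C' * t * t - C' * t * y) with (C' * t * (t - y)) by ring.
        assert (t - y <= 1/2) by (unfold a in Hy; lra).
        assert (0 <= C' * t) by nra.
        assert (C' * t * (t - y) <= (e/2) * (1/2)) by (apply Rmult_le_compat; lra). lra. }
      assert (HU := HUb y ltac:(unfold a in Hy; lra)).
      assert (Lu * y <= e / 4).
      { assert (Lu * y <= Lu * (e / (4 * Lu))) by (apply Rmult_le_compat_l; lra).
        assert (Lu * (e / (4 * Lu)) = e / 4) by (field; lra). lra. }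
      assert (T1 := Rabs_triang_inv (phi t) (phi y)).
      assert (T2 := Rabs_triang_inv (phi y) (u N y)).
      rewrite Rabs_minus_sym in T2. lra.
    - intros c Hc. apply Hphi. unfold a in Hc, Hy. lra.
    - intros c Hc. apply dlin.
    - intros c Hc. eapply Rle_trans. apply HC1. unfold a in Hc, Hy. lra.
      assert (C1 <= Rabs C1) by apply Rle_abs.
      assert (C1 * c <= Rabs C1 * c) by (apply Rmult_le_compat_r; unfold a in Hc, Hy; lra).
      assert (Rabs C1 * c <= C' * t) by (apply Rmult_le_compat; unfold C', a in *; try lra; apply Rabs_pos).
      lra. }
  set (f := fun z => ((du N z - dphi z) ^ 2 + (u N z - phi z) ^ 2) / z ^ 2).
  assert (pr : Riemann_integrable f a t).
  { apply continuity_implies_RiemannInt. unfold a; lra.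
    intros x Hx. unfold f. apply continuity_pt_div.
    - apply continuity_pt_plus; apply cont_sq; apply continuity_pt_minus; auto.
      apply Hcd. unfold a in Hx; lra.
      eapply dpl_cont, Hphi. unfold a in Hx; lra.
    - apply (dpl_cont _ _ _ (derivable_pt_lim_pow _ 2)).
    - apply pow_nonzero. unfold a in Hx; lra. }
  assert (Hint := HN a t pr ltac:(unfold a; lra) ltac:(unfold a; lra) ltac:(lra)).
  assert (Hlb := @RiemannInt_P19 (fct_cte (e * e / 4 / (t * t))) f a t
       (RiemannInt_P14 a t _) pr ltac:(unfold a; lra)).
  rewrite RiemannInt_P15 in Hlb.
  assert (PW : forall x, a < x < t -> fct_cte (e * e / 4 / (t * t)) x <= f x).
  { intros x Hx. unfold fct_cte, f.
    assert (HL := Hlow x ltac:(lra)).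
    assert (e * e / 4 <= (u N x - phi x) ^ 2).
    { rewrite <- pow2_abs. assert (0 <= e/2) by lra. simpl. nra. }
    assert (0 <= (du N x - dphi x) ^ 2) by (apply pow2_ge_0).
    assert (Hxa : 0 < x) by (unfold a in Hx; lra).
    assert (x * x <= t * t) by nra.
    unfold Rdiv. apply Rmult_le_compat.
    + assert (0 <= e * e) by nra. lra.
    + apply Rlt_le, Rinv_0_lt_compat. nra.
    + lra.
    + simpl. rewrite Rmult_1_r. apply Rinv_le_contravar; nra.
}
  specialize (Hlb PW). rename Hlb into L.
  unfold a in L.
  assert (E1 : e * e / 4 / (t * t) * (t - t / 2) = e * e / (8 * t)) by (field; lra).
  rewrite E1 in L.
  assert (E2 : e * e / (8 * t) <= 1) by (eapply Rle_trans; [exact L| exact Hint]).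
  apply (Rmult_le_compat_r (8 * t)) in E2; [|lra].
  replace (e * e / (8 * t) * (8 * t)) with (e * e) in E2 by (field; lra).
  assert (t < e * e / 8) by lra. lra.
Qed.

Lemma rpow_ge0 x y : 0 <= rpow x y.
Proof. unfold rpow. destruct (Rlt_dec 0 x). unfold Rpower. left; apply exp_pos. lra. Qed.

Theorem lemma2p6
  (eps delta K gam Rad : R) (rho0 : R -> R)
  (Heps : 0 < eps) (Hdelta : 0 < delta) (HK : 0 < K)
  (Hgam : 6 / 5 < gam < 4 / 3)
  (HLE : lane_emden K gam Rad rho0)
  (s mu : R) (Hs : 0 < s)
  (phi dphi : R -> R)
  (Hsm : smooth_on 0 Rad phi)
  (Hdphi : forall z, 0 < z < Rad -> derivable_pt_lim phi z (dphi z))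
  (HH : in_H12 Rad phi dphi)
  (Hode : forall z dF dP, 0 < z < Rad ->
     derivable_pt_lim
       (fun x => (4 * (s * eps) / 3 + s * delta + gam * (K * rpow (rho0 x) gam))
                 * dphi x / x ^ 2) z dF ->
     derivable_pt_lim (fun x => K * rpow (rho0 x) gam) z dP ->
     - dF + 4 * dP / z ^ 3 * phi z = mu * rho0 z / z ^ 2 * phi z) :
  exists C eta, 0 < C /\ 0 < eta /\
    forall z, 0 < z < eta ->
      Rabs (phi z) <= C * z ^ 3 /\ Rabs (dphi z) <= C * z ^ 2.
Proof.
  destruct HLE as [HR [[eg [g [Heg [[Dg [HDg0 HDg]] Hgr]]]] [Hpos [_ [Hhyd _]]]]].
  destruct Hsm as [D [HD0 HD]].
  assert (F1 : forall t, 0 < t < Rad -> dphi t = D 1%nat t).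
  { intros t Ht. apply (uniqueness_limite phi t). auto.
    apply (dpl_loc (D 0%nat) phi t _ 0 Rad); auto. }
  assert (F2 : forall t, 0 < t < Rad -> derivable_pt_lim dphi t (D 2%nat t)).
  { intros t Ht. apply (dpl_loc (D 1%nat) dphi t _ 0 Rad); auto.
    intros y Hy. symmetry; auto. }
  set (R0 := Rad / 2).
  destruct (continuity_ab_maj g 0 R0 ltac:(unfold R0; lra)) as [xm [Hxm _]].
  { intros c Hc. apply (dpl_cont _ _ (Dg 1%nat c)).
    apply (dpl_loc (Dg 0%nat) g c _ (- eg) Rad); first [exact HDg0 | apply HDg | idtac]; unfold R0 in Hc; lra. }
  set (M := Rmax (g xm) 1).
  assert (HM1 : 1 <= M) by apply Rmax_r.
  assert (Hrho : forall y, 0 <= y <= R0 -> 0 < rho0 y <= M).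
  { intros y Hy. split. apply Hpos; unfold R0 in Hy; lra.
    rewrite <- Hgr by (unfold R0 in Hy; lra). eapply Rle_trans. apply Hxm; auto. apply Rmax_l. }
  set (A0 := 4 * (s * eps) / 3 + s * delta).
  assert (HA0 : 0 < A0) by (unfold A0; nra).
  set (Q := 16 * PI * M ^ 2 + Rabs mu * M + 1).
  assert (HPI := PI_RGT_0).
  assert (HQ : 0 < Q) by (unfold Q; pose proof (Rabs_pos mu); assert (0 < M^2) by nra; nra).
  set (eta := Rmin (R0 / 2) (Rmin 1 (A0 / (2 * Q)))).
  assert (He1 : eta <= R0 / 2) by apply Rmin_l.
  assert (He2 : eta <= 1) by (unfold eta; eapply Rle_trans; [apply Rmin_r| apply Rmin_l]).
  assert (He3 : eta <= A0 / (2 * Q)) by (unfold eta; eapply Rle_trans; [apply Rmin_r| apply Rmin_r]).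
  assert (Hep : 0 < eta).
  { unfold eta. repeat apply Rmin_pos; try (unfold R0; lra). apply Rdiv_lt_0_compat; lra. }
  destruct (core phi dphi
    (fun x => (A0 + gam * (K * rpow (rho0 x) gam)) * dphi x / x ^ 2) R0 eta A0 Q)
    as [C [HC HCb]].
  - unfold R0 in *; lra.
  - exact HA0.
  - exact HQ.
  - assert (Q * eta <= A0 / 2).
    { assert (Q * eta <= Q * (A0 / (2 * Q))) by (apply Rmult_le_compat_l; lra).
      assert (Q * (A0 / (2 * Q)) = A0 / 2) by (field; lra). lra. }
    assert (Q * eta ^ 2 <= Q * eta) by (apply Rmult_le_compat_l; [lra|]; simpl; rewrite Rmult_1_r; assert (eta * eta <= eta * 1) by (apply Rmult_le_compat_l; lra); lra).
    assert (Q * eta ^ 2 <= A0 / 2) by lra.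
    apply (Rmult_le_reg_r A0); auto. replace (Q * eta ^ 2 / A0 * A0) with (Q * eta ^ 2) by (field; lra). lra.
  - intros t Ht. apply Hdphi. unfold R0 in Ht; lra.
  - intros t Ht.
    assert (Ht' : 0 < t < Rad) by (unfold R0 in Ht; lra).
    destruct (Hhyd t Ht') as [m [[pr Hpr] HdP]].
    set (dP := - (4 * PI * rho0 t / t ^ 2) * m) in HdP.
    set (l := ((gam * dP * dphi t + (A0 + gam * (K * rpow (rho0 t) gam)) * D 2%nat t) * t ^ 2
               - (INR 2 * t ^ 1) * ((A0 + gam * (K * rpow (rho0 t) gam)) * dphi t)) / (t ^ 2)²).
    assert (Hl : derivable_pt_lim
       (fun x => (A0 + gam * (K * rpow (rho0 x) gam)) * dphi x / x ^ 2) t l).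
    { apply (derivable_pt_lim_div (fun x => (A0 + gam * (K * rpow (rho0 x) gam)) * dphi x)
              (fun x => x ^ 2)).
      - apply (derivable_pt_lim_mult (fun x => A0 + gam * (K * rpow (rho0 x) gam)) dphi).
        + replace (gam * dP) with (0 + gam * dP) by ring.
          apply (derivable_pt_lim_plus (fct_cte A0) (mult_real_fct gam (fun x => K * rpow (rho0 x) gam))).
          apply derivable_pt_lim_const. apply derivable_pt_lim_scal. exact HdP.
        + apply F2; auto.
      - apply derivable_pt_lim_pow.
      - apply pow_nonzero; lra. }
    exists l. split; [exact Hl|].
    assert (Eq := Hode t l dP Ht' Hl HdP).
    assert (Hm0 : 0 <= m).
    { rewrite <- Hpr.
      assert (Z := @RiemannInt_P19 (fct_cte 0) (fun y => rho0 y * y ^ 2) 0 t (RiemannInt_P14 0 t 0) pr ltac:(lra)).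
      rewrite RiemannInt_P15 in Z. refine (Rle_trans _ _ _ _ (Z _)). lra.
      intros x Hx. unfold fct_cte. assert (0 < rho0 x) by (apply Hpos; lra).
      assert (0 <= x ^ 2) by (apply pow_le; lra). nra. }
    assert (Hm1 : m <= M * t ^ 2 * t).
    { rewrite <- Hpr.
      assert (Z := @RiemannInt_P19 (fun y => rho0 y * y ^ 2) (fct_cte (M * t ^ 2)) 0 t pr (RiemannInt_P14 0 t _) ltac:(lra)).
      rewrite RiemannInt_P15 in Z. replace (M * t ^ 2 * t) with (M * t ^ 2 * (t - 0)) by ring. apply Z.
      intros x Hx. unfold fct_cte. assert (HH' := Hrho x ltac:(lra)).
      assert (x ^ 2 <= t ^ 2) by (apply pow_incr; lra).
      assert (0 <= x ^ 2) by (apply pow_le; lra). nra. }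
    set (rt := rho0 t) in *.
    assert (Hrt := Hrho t ltac:(lra)). fold rt in Hrt.
    set (a := 16 * PI * rt * (m / t ^ 3)).
    assert (El : l = - (a + mu * rt) * phi t / t ^ 2).
    { assert (l = 4 * dP / t ^ 3 * phi t - mu * rt / t ^ 2 * phi t) by lra.
      rewrite H. unfold a, dP. field. lra. }
    assert (Hmt : 0 <= m / t ^ 3 <= M).
    { assert (0 < t ^ 3) by (apply pow_lt; lra). split. apply Rdiv_le_0_compat; lra.
      apply (Rmult_le_reg_r (t ^ 3)); auto. replace (m / t ^ 3 * t ^ 3) with m by (field; lra).
      replace (M * t ^ 3) with (M * t ^ 2 * t) by ring. lra. }
    assert (Ha : 0 <= a <= 16 * PI * M ^ 2).
    { unfold a. destruct Hmt as [Hmt1 Hmt2]. destruct Hrt as [Hrt1 Hrt2]. split. apply Rmult_le_pos; [|exact Hmt1]. apply Rmult_le_pos; lra.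
      replace (16 * PI * M ^ 2) with (16 * PI * M * M) by ring.
      apply Rmult_le_compat; try nra. }
    assert (Hb : Rabs (a + mu * rt) <= Q).
    { eapply Rle_trans. apply Rabs_triang. rewrite Rabs_mult, (Rabs_pos_eq a), (Rabs_pos_eq rt) by lra.
      assert (Rabs mu * rt <= Rabs mu * M) by (apply Rmult_le_compat_l; [apply Rabs_pos| lra]).
      unfold Q; lra. }
    rewrite El. assert (0 < t ^ 2) by (apply pow_lt; lra).
    unfold Rdiv. rewrite !Rabs_mult, Rabs_Ropp, (Rabs_pos_eq (/ t ^ 2)) by (apply Rlt_le, Rinv_0_lt_compat; lra).
    apply Rmult_le_compat_r; [apply Rlt_le, Rinv_0_lt_compat; lra|].
    apply Rmult_le_compat_r; [apply Rabs_pos| exact Hb].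
  - intros t Ht.
    assert (Hr := rpow_ge0 (rho0 t) gam).
    set (Aa := A0 + gam * (K * rpow (rho0 t) gam)).
    assert (HAa : A0 <= Aa) by (unfold Aa; assert (0 <= K * rpow (rho0 t) gam) by nra; nra).
    assert (0 < t ^ 2) by (apply pow_lt; lra).
    replace (t ^ 2 * Rabs (Aa * dphi t / t ^ 2) / A0) with (Aa / A0 * Rabs (dphi t)).
    2:{ unfold Rdiv. rewrite !Rabs_mult, (Rabs_pos_eq Aa), (Rabs_pos_eq (/ t ^ 2)) by (try apply Rlt_le, Rinv_0_lt_compat; lra).
        field. lra. }
    assert (1 <= Aa / A0).
    { apply (Rmult_le_reg_r A0); auto. replace (Aa / A0 * A0) with Aa by (field; lra). lra. }
    pose proof (Rabs_pos (dphi t)). nra.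
  - intros C1 HC1. apply (h12_small Rad phi dphi eta C1); auto.
    + unfold R0 in *; lra.
    + intros t Ht. apply (dpl_cont _ _ _ (F2 t Ht)).
  - exists C, eta. split; auto. split; auto. intros z Hz. apply HCb. lra.
Qed.
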